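(* Let $\Gamma$ be a weighted digraph with vertex set $\{1,\dots,n\}$, $n>1$, without loops and with strictly positive arc weights, with Laplacian matrix $L$, matrices of in-forests $Q_k$ and in-forest weights $\sigma_k$. For every $m=0,1,2,\dots$, $$(-L)^m=\sum_{k=0}^{m}\alpha_kQ_{m-k},$$ where $\alpha_0=1$ and, for $k\ge1$, $$\alpha_k=\sum_{(p_1,\dots,p_k):\ \sum_{i=1}^k ip_i=k}(-1)^{\sum_{i=1}^k p_i}\frac{\big(\sum_{i=1}^k p_i\big)!}{\prod_{i=1}^k p_i!}\prod_{i=1}^k\sigma_i^{p_i},$$ the outer sum ranging over all $k$-tuples of nonnegative integers $(p_1,\dots,p_k)$ with $\sum_{i=1}^k ip_i=k$.
   Context: $W=(w_{ij})$ is the matrix of arc weights ($w_{ij}>0$ iff there is an arc $i\to j$, else $0$). The Laplacian $L=(\ell_{ij})$: $\ell_{ij}=-w_{ij}$ for $j\ne i$, $\ell_{ii}=\sum_{k\ne i}w_{ik}$. The weight of a subgraph is the product of its arc weights (1 if no arcs); the weight of a set of subgraphs is the sum of their weights (0 for the empty set). A converging tree is a weakly connected digraph with one vertex (the root) of outdegree 0 and all others of outdegree 1; an in-forest is a spanning subgraph of $\Gamma$ whose weak components are converging trees. $\sigma_k$ is the total weight of in-forests of $\Gamma$ with $k$ arcs ($\sigma_0=1$). $Q_k=(q^k_{ij})$ where $q^k_{ij}$ is the total weight of in-forests with $k$ arcs in which $i$ lies in a tree rooted at $j$ ($Q_0=I$). *)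

(* Defs.v *)
From HB Require Import structures.
From mathcomp Require Import all_boot all_order all_algebra.
Set Implicit Arguments. Unset Strict Implicit. Unset Printing Implicit Defensive.
Import Order.TTheory GRing.Theory Num.Theory.
Local Open Scope ring_scope.

Section Forests.
Variables (R : realFieldType) (n : nat) (W : 'M[R]_n).

Definition arcs : {set 'I_n * 'I_n} := [set a | 0 < W a.1 a.2].

Definition laplacian : 'M[R]_n :=
  \matrix_(i, j) if i == j then \sum_(k | k != i) W i k else - W i j.

(* a subgraph (spanning) is given by its arc set F *)
Definition outdeg (F : {set 'I_n * 'I_n}) (i : 'I_n) : nat :=
  #|[set j | (i, j) \in F]|.

Definition weak_adj (F : {set 'I_n * 'I_n}) : rel 'I_n :=
  fun x y => ((x, y) \in F) || ((y, x) \in F).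

Definition wcomp (F : {set 'I_n * 'I_n}) (x : 'I_n) : {set 'I_n} :=
  [set y | connect (weak_adj F) x y].

(* the weak component C is a converging tree: exactly one root of outdegree 0,
   all other vertices of outdegree 1 (C is weakly connected by construction,
   and every arc of F touching C lies inside C) *)
Definition converging_tree_comp (F : {set 'I_n * 'I_n}) (C : {set 'I_n}) : bool :=
  [exists r in C, (outdeg F r == 0)%N &&
     [forall v in C, (v != r) ==> (outdeg F v == 1)%N]].

Definition in_forest (F : {set 'I_n * 'I_n}) : bool :=
  (F \subset arcs) && [forall x, converging_tree_comp F (wcomp F x)].

Definition sweight (F : {set 'I_n * 'I_n}) : R := \prod_(a in F) W a.1 a.2.

Definition sigma (k : nat) : R :=
  \sum_(F : {set 'I_n * 'I_n} | in_forest F && (#|F| == k)) sweight F.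

Definition rooted_at (F : {set 'I_n * 'I_n}) (i j : 'I_n) : bool :=
  (j \in wcomp F i) && (outdeg F j == 0)%N.

Definition Qmx (k : nat) : 'M[R]_n :=
  \matrix_(i, j) \sum_(F : {set 'I_n * 'I_n} |
                      [&& in_forest F, #|F| == k & rooted_at F i j]) sweight F.

(* alpha_k : p : 'I_k -> 'I_k.+1 encodes (p_1,...,p_k) with p_{i+1} = p i;
   every nonneg solution of sum i p_i = k has p_i <= k *)
Definition alpha (k : nat) : R :=
  if k == 0%N then 1 else
  \sum_(p : {ffun 'I_k -> 'I_k.+1} | (\sum_(i < k) i.+1 * p i)%N == k)
    (-1) ^+ (\sum_(i < k) p i)%N
    * ((\sum_(i < k) p i)`!)%:R / (\prod_(i < k) (p i)`!)%:R
    * \prod_(i < k) sigma i.+1 ^+ p i.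

End Forests.

Definition mxpow (R : realFieldType) (n : nat) (A : 'M[R]_n) (m : nat) : 'M[R]_n :=
  iter m (mulmx A) 1%:M.

(* Main.v *)
Require Import Defs.
From HB Require Import structures.
From mathcomp Require Import all_boot all_order all_algebra.
From mathcomp Require Import ring lra zify.
Set Implicit Arguments. Unset Strict Implicit. Unset Printing Implicit Defensive.
Import Order.TTheory GRing.Theory Num.Theory.
Local Open Scope ring_scope.

Section Graph.
Variables (R : realFieldType) (n : nat) (W : 'M[R]_n).
Implicit Types (F G H : {set 'I_n * 'I_n}) (x y z i j l a b v : 'I_n).

Definition dirF (F : {set 'I_n * 'I_n}) : rel 'I_n := fun x y => (x, y) \in F.
Definition sink (F : {set 'I_n * 'I_n}) (x z : 'I_n) : bool := connect (dirF F) x z && (outdeg F z == 0)%N.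
Definition fdet (F : {set 'I_n * 'I_n}) := forall x, (outdeg F x <= 1)%N.

Lemma outdeg0P F x : reflect (forall y, (x, y) \notin F) (outdeg F x == 0)%N.
Proof.
rewrite /outdeg cards_eq0; apply: (iffP eqP) => [H y|H].
  apply/negP => Hy; have : y \in [set j | (x, j) \in F] by rewrite inE.
  by rewrite H inE.
by apply/setP => y; rewrite !inE (negbTE (H y)).
Qed.

Lemma outdeg_gt0 F x y : (x, y) \in F -> (0 < outdeg F x)%N.
Proof. by move=> H; rewrite lt0n; apply/negP => /outdeg0P /(_ y); rewrite H. Qed.

Lemma det_uniq F x a b : fdet F -> (x, a) \in F -> (x, b) \in F -> a = b.
Proof.
move=> /(_ x) /card_le1P H Ha Hb.
have := H a; rewrite inE => /(_ Ha) /(_ b); rewrite !inE Hb => /esym /eqP.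
by move=> ->.
Qed.

Lemma connect_first (e : rel 'I_n) x z : connect e x z -> x != z ->
  exists y, e x y /\ connect e y z.
Proof.
move=> /connectP [[|y p] /= Hp ->]; first by rewrite eqxx.
by move: Hp => /andP [Hxy Hp] _; exists y; split => //; apply/connectP; exists p.
Qed.

Lemma sink_uniq F x z1 z2 : fdet F -> sink F x z1 -> sink F x z2 -> z1 = z2.
Proof.
move=> Hd /andP [/connectP [p Hp ->] H1] /andP [Hc2 H2].
elim: p x Hp H1 Hc2 => [|y p IH] x /= Hp H1 Hc2.
  case: (eqVneq x z2) => // /(connect_first Hc2) [y [Hy _]].
  by move/outdeg0P: H1 => /(_ y); rewrite -[_ \in _]/(dirF F x y) Hy.
move: Hp => /andP [Hxy Hp].
case: (eqVneq x z2) => [Ex|].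
  by subst x; move/outdeg0P: H2 => /(_ y); rewrite -[_ \in _]/(dirF F z2 y) Hxy.
move=> /(connect_first Hc2) [y' [Hy' Hc']].
have Ey : y' = y by apply: det_uniq Hd Hy' Hxy.
by subst y'; apply: IH.
Qed.

Lemma sink_step F x y z : fdet F -> (x, y) \in F -> sink F x z = sink F y z.
Proof.
move=> Hd Hxy; apply/idP/idP => /andP [Hc H0]; apply/andP; split => //.
  case: (eqVneq x z) => [Ex|].
    by subst x; move/outdeg0P: H0 => /(_ y); rewrite Hxy.
  move=> /(connect_first Hc) [y' [Hy' Hc']].
  by rewrite -(det_uniq Hd Hy' Hxy).
by apply: connect_trans Hc; apply: connect1.
Qed.

Lemma weak_sym F : symmetric (weak_adj F).
Proof. by move=> x y; rewrite /weak_adj orbC. Qed.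

Lemma sink_weak F x y z : fdet F -> connect (weak_adj F) x y ->
  sink F x z = sink F y z.
Proof.
move=> Hd /connectP [p Hp ->]; elim: p x Hp => [|y' p IH] x //= /andP [Hxy Hp].
rewrite -IH //; case/orP: Hxy => H; first by rewrite (sink_step _ Hd H).
by rewrite (sink_step _ Hd H).
Qed.

Lemma sink_connect F x y z : fdet F -> sink F x z -> connect (dirF F) x y ->
  sink F y z.
Proof.
move=> Hd Hs /connectP [p Hp ->]; elim: p x Hp Hs => [|y' p IH] x //= /andP [Hxy Hp] Hs.
by apply: IH => //; rewrite -(sink_step _ Hd Hxy).
Qed.

Lemma dir_weak F x y : connect (dirF F) x y -> connect (weak_adj F) x y.
Proof.
apply: connect_sub => a b H; apply: connect1; by rewrite /weak_adj -[(a, b) \in F]/(dirF F a b) H.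
Qed.

Lemma sink_refl F x : (outdeg F x == 0)%N -> sink F x x.
Proof. by move=> H; rewrite /sink connect0. Qed.

Lemma sink_iff F x z j : fdet F -> sink F x z -> sink F x j = (j == z).
Proof.
move=> Hd Hs; apply/idP/eqP => [Hj|->//]; exact: sink_uniq Hd Hj Hs.
Qed.

Lemma forestP F : reflect [/\ F \subset arcs W, fdet F & forall x, exists z, sink F x z]
  (in_forest W F).
Proof.
apply: (iffP andP) => [[Hs /forallP Hf]|[Hs Hd He]].
  have Hd : fdet F.
    move=> x; move/existsP: (Hf x) => [r /and3P [_ H0 /forallP H1]].
    case: (eqVneq x r) => [->|Hx]; first by rewrite (eqP H0).
    by move: (H1 x); rewrite inE connect0 Hx /= => /eqP ->.
  split => // x; move/existsP: (Hf x) => [r /and3P [Hr H0 _]].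
  exists r; rewrite (sink_weak _ Hd (y := r)) ?sink_refl //.
  by move: Hr; rewrite inE.
split => //; apply/forallP => x; have [z Hz] := He x.
apply/existsP; exists z; apply/and3P; split.
- by rewrite inE; apply: dir_weak; case/andP: Hz.
- by case/andP: Hz.
apply/forallP => v; apply/implyP; rewrite inE => Hv; apply/implyP => Hvz.
have := Hd v; rewrite leq_eqVlt ltnS leqn0; case/orP => // H0.
have Hs' : sink F x v by rewrite (sink_weak _ Hd Hv) sink_refl.
by rewrite (sink_uniq Hd Hs' Hz) eqxx in Hvz.
Qed.

Lemma rootedE F i j : in_forest W F -> rooted_at F i j = sink F i j.
Proof.
move=> /forestP [_ Hd _]; rewrite /rooted_at inE.
apply/andP/idP => [[Hc H0]|Hs].
  by rewrite (sink_weak _ Hd Hc) sink_refl.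
by case/andP: (Hs) => Hc H0; split => //; apply: dir_weak.
Qed.


Lemma outdeg_sub F1 F2 x : F1 \subset F2 -> (outdeg F1 x <= outdeg F2 x)%N.
Proof.
move=> /subsetP S; apply: subset_leq_card; apply/subsetP => y; rewrite !inE; exact: S.
Qed.

Lemma connect_dir_sub F1 F2 x y : F1 \subset F2 ->
  connect (dirF F1) x y -> connect (dirF F2) x y.
Proof.
move=> /subsetP S; apply: connect_sub => a b Hab; apply: connect1; exact: S.
Qed.

Lemma wcomp_sink H i x : fdet H -> (outdeg H i == 0)%N ->
  (x \in wcomp H i) = sink H x i.
Proof.
move=> Hd H0; rewrite inE; apply/idP/idP => [Hc|/andP [Hc _]].
  by rewrite -(sink_weak _ Hd Hc) sink_refl.
by rewrite (sym_connect_sym (@weak_sym H)); apply: dir_weak.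
Qed.

Lemma outdegU1 H i l x : x != i -> outdeg ((i, l) |: H) x = outdeg H x.
Proof.
move=> Hx; rewrite /outdeg; apply: eq_card => y.
by rewrite !inE xpair_eqE (negbTE Hx).
Qed.

Lemma no_cycle G i l : fdet G -> (i, l) \in G -> connect (dirF G) l i ->
  forall z, ~~ sink G i z.
Proof.
move=> Hd Hil Hli z; apply/negP => /andP [/connectP [p Hp Ez] H0].
have Hi0 := outdeg_gt0 Hil.
suff key : forall v, path (dirF G) v p -> z = last v p -> connect (dirF G) v i -> False.
  by apply: (key i Hp Ez).
clear Hp Ez; elim: p => [|y p IH] v /= Hp Ez Hv.
  subst z; case: (eqVneq v i) => [Ev|Hvi].
    by subst v; rewrite (eqP H0) in Hi0.
  have [y [Hy _]] := connect_first Hv Hvi.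
  by move/outdeg0P: H0 => /(_ y); rewrite -[_ \in _]/(dirF G v y) Hy.
move: Hp => /andP [Hvy Hp]; apply: (IH y Hp Ez).
case: (eqVneq v i) => [Ev|Hvi].
  by subst v; rewrite (det_uniq Hd Hvy Hil).
have [y' [Hy' Hc]] := connect_first Hv Hvi.
by rewrite -(det_uniq Hd Hy' Hvy).
Qed.

Lemma forest_remove G i l : in_forest W G -> (i, l) \in G ->
  [/\ in_forest W (G :\ (i, l)), (outdeg (G :\ (i, l)) i == 0)%N
    & l \notin wcomp (G :\ (i, l)) i].
Proof.
move=> /forestP [Hs Hd He] Hil.
set H := G :\ (i, l).
have HG : H \subset G by apply: subD1set.
have HdH : fdet H by move=> x; apply: leq_trans (Hd x); apply: outdeg_sub.
have H0 : (outdeg H i == 0)%N.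
  apply/outdeg0P => y; rewrite !inE xpair_eqE eqxx /=.
  case: (eqVneq y l) => //= Hy; apply/negP => Hiy.
  by move: Hy; rewrite (det_uniq Hd Hiy Hil) eqxx.
have HeH : forall x, exists z, sink H x z.
  move=> x; have [z /andP [/connectP [p Hp Ez] Hz0]] := He x.
  elim: p x Hp Ez => [|y p IH] x /= Hp Ez.
    exists x; apply: sink_refl; subst z.
    by rewrite -leqn0 (leq_trans (outdeg_sub x HG)) // leqn0.
  case: (eqVneq x i) => [->|Hxi]; first by exists i; apply: sink_refl.
  move: Hp => /andP [Hxy Hp]; have [z' Hz'] := IH y Hp Ez.
  exists z'; case/andP: Hz' => Hc Hz'; rewrite /sink Hz' andbT.
  apply: connect_trans Hc; apply: connect1.
  by rewrite /dirF !inE xpair_eqE (negbTE Hxi) /=; exact: Hxy.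
split => //; first by apply/forestP; split => //; apply: subset_trans Hs.
apply/negP; rewrite (wcomp_sink _ HdH H0) => /andP [Hc _].
have [z Hz] := He i.
by move: (no_cycle Hd Hil (connect_dir_sub HG Hc) z); rewrite Hz.
Qed.

Lemma forest_add H i l : in_forest W H -> (outdeg H i == 0)%N ->
  (i, l) \in arcs W -> l \notin wcomp H i ->
  in_forest W ((i, l) |: H) /\ (forall x j : 'I_n, rooted_at ((i, l) |: H) x j =
     if x \in wcomp H i then rooted_at H l j else rooted_at H x j).
Proof.
move=> HfH H0 Ha Hl; have /forestP [Hs Hd He] := HfH.
set G := (i, l) |: H.
have HG : H \subset G by apply: subsetUr.
have Hil : (i, l) \in G by rewrite !inE eqxx.
have HdG : fdet G.
  move=> x; case: (eqVneq x i) => [->|Hxi]; last by rewrite outdegU1.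
  apply/card_le1P => a; rewrite !inE xpair_eqE eqxx /= => Ha' b.
  rewrite !inE xpair_eqE eqxx /=.
  have Hn : forall c, ((i, c) \in H) = false.
    by move=> c; apply/negbTE; move/outdeg0P: H0; apply.
  by move: Ha'; rewrite Hn orbF => /eqP ->; rewrite Hn orbF.
have Hsk : forall x z, sink H x z -> z != i -> sink G x z.
  move=> x z /andP [Hc Hz] Hzi; rewrite /sink (connect_dir_sub HG Hc) /=.
  by rewrite outdegU1.
have [zl Hzl] := He l.
have Hzli : zl != i.
  apply/negP => /eqP E; subst zl; move/negP: Hl; apply.
  by rewrite (wcomp_sink _ Hd H0).
have HskI : forall x, sink H x i -> sink G x zl.
  move=> x /andP [Hc _]; have /andP [Hc' Hz'] := Hsk _ _ Hzl Hzli.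
  rewrite /sink Hz' andbT; apply: connect_trans (connect_dir_sub HG Hc) _.
  by apply: connect_trans Hc'; apply: connect1.
have HeG : forall x, exists z, sink G x z.
  move=> x; have [z Hz] := He x; case: (eqVneq z i) => [Ez|Hzi].
    by subst z; exists zl; apply: HskI.
  by exists z; apply: Hsk.
have HfG : in_forest W G.
  by apply/forestP; split => //; rewrite subUset sub1set Ha Hs.
split => // x j; rewrite (rootedE _ _ HfG) !(rootedE _ _ HfH) (wcomp_sink _ Hd H0).
case: ifP => Hxi.
  by rewrite (sink_iff _ HdG (HskI _ Hxi)) (sink_iff _ Hd Hzl).
have [z Hz] := He x; have Hzi : z != i.
  by apply/negP => /eqP E; subst z; rewrite Hz in Hxi.
by rewrite (sink_iff _ HdG (Hsk _ _ Hz Hzi)) (sink_iff _ Hd Hz).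
Qed.

End Graph.

Section Comb.
Variables (R : realFieldType) (n : nat) (W : 'M[R]_n).
Hypothesis hW0 : forall i j : 'I_n, 0 <= W i j.
Implicit Types (F G H : {set 'I_n * 'I_n}) (x y z i j l a b v : 'I_n).

Definition Sk k : pred {set 'I_n * 'I_n} := fun F => in_forest W F && (#|F| == k)%N.
Definition cnd k i l : pred {set 'I_n * 'I_n} := fun H =>
  [&& in_forest W H, #|H| == k, outdeg H i == 0, (i, l) \in arcs W & l \notin wcomp H i]%N.

Local Notation rho F x j := ((rooted_at F x j)%:R : R).

Lemma forest_fdet F : in_forest W F -> fdet F.
Proof. by case/forestP. Qed.

Lemma W_arc i l : (i, l) \notin arcs W -> W i l = 0.
Proof.
rewrite inE /= => H; apply/eqP; rewrite eq_le hW0 andbT leNgt; exact: H.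
Qed.

Lemma sweightU1 H i l : (i, l) \notin H -> sweight W ((i, l) |: H) = W i l * sweight W H.
Proof. by move=> Hn; rewrite /sweight big_setU1. Qed.

Lemma KR (X : {set 'I_n * 'I_n} -> R) k i l :
  \sum_(G | Sk k.+1 G && ((i, l) \in G)) X G = \sum_(H | cnd k i l H) X ((i, l) |: H).
Proof.
rewrite (reindex_onto (fun H => (i, l) |: H) (fun G => G :\ (i, l))) /=; last first.
  by move=> G /andP [_ Hil]; apply: setD1K.
apply: eq_bigl => H; apply/idP/idP.
  case/andP => /andP [/andP [Hf Hc] _] /eqP HE.
  have Hil : (i, l) \in (i, l) |: H by rewrite setU11.
  have [Hf' H0 Hl] := forest_remove Hf Hil; rewrite HE in Hf' H0 Hl.
  have Hn : (i, l) \notin H by move/outdeg0P: H0; apply.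
  move: Hc; rewrite cardsU1 Hn add1n eqSS => Hc.
  apply/and5P; split => //.
  by case/forestP: Hf => /subsetP Hs _ _; apply: Hs.
case/and5P => Hf Hc H0 Ha Hl; have [Hf' _] := forest_add Hf H0 Ha Hl.
have Hn : (i, l) \notin H by move/outdeg0P: H0; apply.
by rewrite /Sk Hf' cardsU1 Hn (eqP Hc) setU11 setU1K ?eqxx.
Qed.

Lemma KR2 (X : {set 'I_n * 'I_n} -> R) k i :
  \sum_(G | Sk k.+1 G && (outdeg G i != 0)%N) X G
  = \sum_l \sum_(H | cnd k i l H) X ((i, l) |: H).
Proof.
transitivity (\sum_l \sum_(G | Sk k.+1 G && ((i, l) \in G)) X G); last first.
  by apply: eq_bigr => l _; apply: KR.
rewrite big_mkcond /=; symmetry.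
under eq_bigr do rewrite big_mkcond.
rewrite exchange_big /=; apply: eq_bigr => G _.
case: (boolP (Sk k.+1 G)) => /= HS; last by rewrite big1.
case/andP: HS => Hf _.
rewrite -big_mkcond /=.
rewrite (eq_bigl (fun l => l \in [set l | (i, l) \in G])); last by move=> l; rewrite inE.
rewrite sumr_const; change (X G *+ outdeg G i = (if outdeg G i != 0%N then X G else 0)).
by have := forest_fdet Hf i; case: (outdeg G i) => [|[|m]].
Qed.

Lemma antisym (c g : 'I_n -> R) :
  \sum_a c a * \sum_b c b * (g b - g a) = 0.
Proof.
have E1 : forall a b, c a * (c b * (g b - g a)) = c a * c b * g b - c b * c a * g a.
  by move=> a b; ring.
under eq_bigr do rewrite mulr_sumr.
under eq_bigr do under eq_bigr do rewrite E1.
under eq_bigr do rewrite sumrB.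
by rewrite sumrB [X in _ - X]exchange_big /= subrr.
Qed.

Lemma rho_root F i j : in_forest W F -> (outdeg F i == 0)%N -> rho F i j = (i == j)%:R.
Proof.
move=> Hf H0; rewrite (rootedE _ _ Hf) (sink_iff _ (forest_fdet Hf) (sink_refl H0)).
by rewrite eq_sym.
Qed.

Lemma rho_comp F i l j : in_forest W F -> l \in wcomp F i -> rho F l j = rho F i j.
Proof.
move=> Hf; rewrite inE => Hc; rewrite !(rootedE _ _ Hf).
by rewrite (sink_weak _ (forest_fdet Hf) Hc).
Qed.

Lemma Eid k i j :
  \sum_(G | Sk k.+1 G) sweight W G * (rho G i j - (i == j)%:R)
  = \sum_(F | Sk k F) sweight W F * \sum_l W i l * (rho F l j - rho F i j).
Proof.
rewrite (bigID (fun G => outdeg G i != 0)%N) /=.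
rewrite [X in _ + X]big1 ?addr0; last first.
  move=> G /andP [/andP [Hf _] H0]; rewrite negbK in H0.
  by rewrite rho_root // subrr mulr0.
rewrite KR2.
transitivity (\sum_l \sum_(H | Sk k H && (outdeg H i == 0)%N)
                 W i l * (sweight W H * (rho H l j - rho H i j))).
  apply: eq_bigr => l _.
  rewrite [RHS](bigID (fun H => ((i, l) \in arcs W) && (l \notin wcomp H i))) /=.
  rewrite [X in _ = _ + X]big1 ?addr0; last first.
    move=> H /andP [/andP [/andP [Hf _] H0] Hc]; rewrite negb_and negbK in Hc.
    case/orP: Hc => Hc; first by rewrite W_arc // mul0r.
    by rewrite (rho_comp j Hf Hc) subrr !mulr0.
  apply: eq_big => [H|H Hc]; first by rewrite /cnd /Sk -!andbA.
  case/and5P: Hc => Hf Hc H0 Ha Hl.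
  have [Hf' Hr] := forest_add Hf H0 Ha Hl.
  have Hn : (i, l) \notin H by move/outdeg0P: H0; apply.
  by rewrite sweightU1 // Hr inE connect0 (rho_root j Hf H0) mulrA.
rewrite [RHS](bigID (fun F => outdeg F i == 0)%N) /=.
rewrite [X in _ = _ + X](_ : _ = 0) ?addr0.
  rewrite exchange_big /=; apply: eq_bigr => H _.
  by rewrite mulr_sumr; apply: eq_bigr => l _; rewrite mulrCA.
case: k => [|k].
  apply: big1 => F /andP [/andP [_ Hc] Hd]; exfalso.
  move: Hc; rewrite cards_eq0 => /eqP HF; subst F; move: Hd.
  rewrite /outdeg (_ : [set _ | _] = set0) ?cards0 //.
  by apply/setP => y; rewrite !inE.
rewrite KR2.
pose c H l := W i l * (l \notin wcomp H i)%:R.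
transitivity (\sum_l0 \sum_(H | Sk k H && (outdeg H i == 0)%N)
   sweight W H * (c H l0 * \sum_l c H l * (rho H l j - rho H l0 j))); last first.
  rewrite exchange_big /=; apply: big1 => H _.
  by rewrite -mulr_sumr antisym mulr0.
apply: eq_bigr => l0 _.
rewrite [RHS](bigID (fun H => ((i, l0) \in arcs W) && (l0 \notin wcomp H i))) /=.
rewrite [X in _ = _ + X]big1 ?addr0; last first.
  move=> H /andP [/andP [/andP [Hf _] H0] Hc]; rewrite negb_and negbK in Hc.
  case/orP: Hc => Hc; first by rewrite /c W_arc // !(mul0r, mulr0).
  by rewrite /c Hc !(mul0r, mulr0).
apply: eq_big => [H|H Hc]; first by rewrite /cnd /Sk -!andbA.
case/and5P: Hc => Hf Hc H0 Ha Hl.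
have [Hf' Hr] := forest_add Hf H0 Ha Hl.
have Hn : (i, l0) \notin H by move/outdeg0P: H0; apply.
rewrite sweightU1 // /c Hl mulr1 [RHS]mulrA; congr (_ * _); first exact: mulrC.
have Hii : i \in wcomp H i by rewrite inE connect0.
apply: eq_bigr => l _; rewrite !Hr Hii.
by case: ifP => _ /=; rewrite ?subrr ?mulr0 ?mul0r ?mulr1.
Qed.

End Comb.

Section Alpha.
Variables (R : realFieldType) (s : nat -> R).

Section FixN.
Variable N : nat.
Implicit Types (p q : {ffun 'I_N -> 'I_N.+1}) (i t : 'I_N).

Definition Pm m p : bool := (\sum_(t < N) t.+1 * p t)%N == m.
Definition sz p : nat := (\sum_(t < N) p t)%N.
Definition term p : R :=
  (-1) ^+ sz p * ((sz p)`!)%:R / (\prod_(t < N) (p t)`!)%:R * \prod_(t < N) s t.+1 ^+ p t.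
Definition T m : R := \sum_(p | Pm m p) term p.

Definition inc i q : {ffun 'I_N -> 'I_N.+1} := [ffun t => inord (q t + (t == i))].
Definition dec i p : {ffun 'I_N -> 'I_N.+1} := [ffun t => inord (p t - (t == i))].

Lemma dec_val i p t : (dec i p t : nat) = (p t - (t == i))%N.
Proof.
by rewrite ffunE inordK // ltnS (leq_trans (leq_subr _ _)) // -ltnS.
Qed.

Lemma inc_val i q t : (q i < N)%N -> (inc i q t : nat) = (q t + (t == i))%N.
Proof.
move=> Hq; rewrite ffunE inordK //; case: (eqVneq t i) => [->|_].
  by rewrite addn1 ltnS.
by rewrite addn0.
Qed.

Lemma sum_delta (f : 'I_N -> nat) i :
  (\sum_(t < N) f t * (t == i))%N = f i.
Proof.
rewrite (bigD1 i) //= eqxx muln1 big1 ?addn0 // => t /negbTE ->.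
by rewrite muln0.
Qed.

Lemma dec_inc i q : (q i < N)%N -> dec i (inc i q) = q.
Proof.
move=> Hq; apply/ffunP => t; apply/val_inj => /=.
by rewrite dec_val inc_val // addnK.
Qed.

Lemma inc_dec i p : (0 < p i)%N -> inc i (dec i p) = p.
Proof.
move=> Hp; have Hd : (dec i p i < N)%N.
  by rewrite dec_val eqxx subn1 -ltnS prednK.
apply/ffunP => t; apply/val_inj => /=.
rewrite inc_val // dec_val; case: (eqVneq t i) => [->|_]; last by rewrite subn0 addn0.
by rewrite subn1 addn1 prednK.
Qed.

Lemma sz_dec i p : (0 < p i)%N -> sz (dec i p) = (sz p).-1.
Proof.
move=> Hp; rewrite /sz (bigD1 i) //= [X in _ = X.-1](bigD1 i) //= dec_val eqxx.
rewrite (eq_bigr (fun t : 'I_N => (p t : nat))); last first.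
  by move=> t /negbTE Ht; rewrite dec_val Ht subn0.
lia.
Qed.

Lemma prodfact_dec i p : (0 < p i)%N ->
  (\prod_(t < N) (p t)`!)%N = (p i * \prod_(t < N) (dec i p t)`!)%N.
Proof.
move=> Hp; rewrite [in LHS](bigD1 i) //= [in RHS](bigD1 i) //= dec_val eqxx.
rewrite (eq_bigr (fun t : 'I_N => (dec i p t)`!)); last first.
  by move=> t /negbTE Ht; rewrite dec_val Ht subn0.
have -> : (p i)`! = (p i * (p i).-1`!)%N by rewrite -{1}(prednK Hp) factS prednK.
by rewrite mulnA subn1.
Qed.

Lemma prods_dec i p : (0 < p i)%N ->
  \prod_(t < N) s t.+1 ^+ p t = s i.+1 * \prod_(t < N) s t.+1 ^+ dec i p t.
Proof.
move=> Hp; rewrite [in LHS](bigD1 i) //= [in RHS](bigD1 i) //= dec_val eqxx.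
rewrite (eq_bigr (fun t : 'I_N => s t.+1 ^+ dec i p t)); last first.
  by move=> t /negbTE Ht; rewrite dec_val Ht subn0.
by rewrite mulrA -exprS subn1 prednK.
Qed.

Lemma prodfact_neq0 p : (\prod_(t < N) (p t)`!)%:R != 0 :> R.
Proof. by rewrite pnatr_eq0 -lt0n prodn_gt0 // => t; apply: fact_gt0. Qed.

Lemma term_dec p : (0 < sz p)%N ->
  term p = \sum_(i < N | (0 < p i)%N) - (s i.+1 * term (dec i p)).
Proof.
move=> Hs.
pose K : R := (-1) ^+ sz p * ((sz p).-1`!)%:R / (\prod_(t < N) (p t)`!)%:R
               * \prod_(t < N) s t.+1 ^+ p t.
have E1 : forall i, (0 < p i)%N -> - (s i.+1 * term (dec i p)) = (p i)%:R * K.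
  move=> i Hp; rewrite /term /K sz_dec // (prodfact_dec Hp) (prods_dec Hp).
  have Hq := prodfact_neq0 (dec i p).
  have Hpi : (p i)%:R != 0 :> R by rewrite pnatr_eq0 -lt0n.
  have -> : (-1) ^+ sz p = - (-1) ^+ (sz p).-1 :> R.
    by rewrite -{1}(prednK Hs) exprS mulN1r.
  rewrite natrM.
  by field; rewrite Hq Hpi.
transitivity (\sum_i (p i)%:R * K); last first.
  rewrite [LHS](bigID (fun i : 'I_N => (0 < p i)%N)) /= [X in _ + X]big1 ?addr0.
    by apply: eq_bigr => i Hp; rewrite E1.
  by move=> i; rewrite -leqNgt leqn0 => /eqP ->; rewrite mul0r.
rewrite -mulr_suml -natr_sum -/(sz p) /term /K.
rewrite -{2}(prednK Hs) factS natrM; have := prodfact_neq0 p.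
set P := (\prod_(t < N) (p t)`!)%:R; move=> HP.
rewrite prednK //.
clearbody P; ring.
Qed.



Lemma wsum_ge q i : (i.+1 * q i <= \sum_(t < N) t.+1 * q t)%N.
Proof. by rewrite (bigD1 i) //= leq_addr. Qed.

Lemma sz_pos m p : (0 < m)%N -> Pm m p -> (0 < sz p)%N.
Proof.
move=> Hm /eqP Hp; rewrite lt0n; apply/negP => /eqP H0.
move: H0; rewrite /sz => /eqP; rewrite sum_nat_eq0 => /forallP H0.
move: Hm; rewrite -Hp lt0n sum_nat_eq0 => /negP; apply; apply/forallP => t.
by rewrite (eqP (H0 t)) muln0.
Qed.

Lemma T_split m : (0 < m)%N ->
  T m = - \sum_(i < N) s i.+1 * \sum_(p | Pm m p && (0 < p i)%N) term (dec i p).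
Proof.
move=> Hm; rewrite /T.
rewrite (eq_bigr (fun p => \sum_(i < N | (0 < p i)%N) - (s i.+1 * term (dec i p)))); last first.
  by move=> p Hp; apply: term_dec; apply: sz_pos Hp.
under eq_bigr do rewrite big_mkcond.
rewrite exchange_big /= -sumrN; apply: eq_bigr => i _.
rewrite mulr_sumr -sumrN [RHS]big_mkcond [LHS]big_mkcond; apply: eq_bigr => p _.
by case: (Pm m p); case: (0 < p i)%N.
Qed.

Lemma inc_wrap i q : (N <= q i)%N -> (inc i q i : nat) = 0%N.
Proof.
move=> Hq; have Eq : (q i : nat) = N by apply/eqP; rewrite eqn_leq Hq -ltnS ltn_ord.
by rewrite ffunE /inord val_insubd eqxx Eq addn1 ltnn.
Qed.

Lemma Pm_inc m i q : (q i < N)%N -> (i < m)%N ->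
  Pm m (inc i q) = Pm (m - i.+1)%N q.
Proof.
move=> Hq Him; rewrite /Pm.
rewrite (eq_bigr (fun t : 'I_N => (t.+1 * q t + t.+1 * (t == i))%N)); last first.
  by move=> t _; rewrite inc_val // mulnDr.
rewrite big_split /= sum_delta; apply/eqP/eqP => H; lia.
Qed.

Lemma T_inner m i : (m <= N)%N ->
  \sum_(p | Pm m p && (0 < p i)%N) term (dec i p)
  = if (i < m)%N then T (m - i.+1)%N else 0.
Proof.
move=> HmN; case: ifP => Him; last first.
  apply: big1 => p /andP [/eqP Hp Hpi]; exfalso.
  have := wsum_ge p i; rewrite Hp => H.
  have : (i.+1 <= i.+1 * p i)%N by rewrite leq_pmulr.
  move: Him => /negbT; rewrite -leqNgt => H'; move=> H2; by move: (leq_trans H2 (leq_trans H H')); rewrite ltnn.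
rewrite (reindex_onto (inc i) (dec i)); last by move=> p /andP [_ Hp]; apply: inc_dec.
rewrite /T; apply: eq_big => q.
  case: (ltnP (q i) N) => Hq.
    by rewrite dec_inc // eqxx andbT inc_val // eqxx addn1 /= andbT Pm_inc.
  rewrite inc_wrap //= andbF /=; apply/esym/negP => /eqP Hp.
  have := wsum_ge q i; rewrite Hp => H.
  have H3 : (q i <= i.+1 * q i)%N by rewrite leq_pmull.
  have H4 := ltn_ord i; move: H H3 Hq H4 HmN Him.
  move: (i.+1 * q i)%N (q i : nat) (i : nat) => a b c; lia.
by move=> /andP [_ /eqP ->].
Qed.

Lemma T_rec m : (0 < m)%N -> (m <= N)%N ->
  T m = - \sum_(i < N) s i.+1 * (if (i < m)%N then T (m - i.+1)%N else 0).
Proof.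
move=> Hm HmN; rewrite T_split //; congr (- _); apply: eq_bigr => i _.
by rewrite T_inner.
Qed.

Lemma T0 : T 0 = 1.
Proof.
rewrite /T (big_pred1 [ffun _ => ord0]); last first.
  move=> p; rewrite /Pm /= sum_nat_eq0; apply/forallP/eqP => [H|->].
    apply/ffunP => t; apply/val_inj; rewrite ffunE /=.
    by move: (H t); rewrite muln_eq0 /= => /eqP.
  by move=> t; rewrite ffunE muln0.
rewrite /term /sz !big1 ?expr0 ?divr1 ?mulr1 //.
- by move=> t _; rewrite ffunE expr0.
- by move=> t _; rewrite ffunE.
by move=> t _; rewrite ffunE.
Qed.

End FixN.

Definition al m : R := if m == 0%N then 1 else T m m.

Lemma T_al m N : (m <= N)%N -> T N m = al m.
Proof.
elim/ltn_ind: m N => m IH N HmN.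
rewrite /al; case: (eqVneq m 0%N) => [->|Hm0]; first by rewrite T0.
have Hm : (0 < m)%N by rewrite lt0n.
have key : forall N', (m <= N')%N ->
  T N' m = - \sum_(i < m) s i.+1 * al (m - i.+1)%N.
  move=> N' HN'; rewrite T_rec //; congr (- _).
  rewrite (big_ord_widen N' (fun i => s i.+1 * al (m - i.+1)%N)) //.
  rewrite [RHS]big_mkcond /=; apply: eq_bigr => i _.
  case: ifP => Hi; last by rewrite mulr0.
  by rewrite IH //; lia.
by rewrite key // key.
Qed.

Lemma al_rec m : al m.+1 = - \sum_(i < m.+1) s i.+1 * al (m - i)%N.
Proof.
rewrite -(T_al (leqnn m.+1)) T_rec //; congr (- _); apply: eq_bigr => i _.
by rewrite ltn_ord subSS T_al // (leq_trans (leq_subr i m)).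
Qed.

End Alpha.


Section Main.
Variables (R : realFieldType) (n : nat) (W : 'M[R]_n).
Hypotheses (hW0 : forall i j : 'I_n, 0 <= W i j) (hloop : forall i : 'I_n, W i i = 0).

Lemma Qentry k i j : Qmx W k i j = \sum_(F | Sk W k F) sweight W F * (rooted_at F i j)%:R.
Proof.
rewrite mxE big_mkcond [RHS]big_mkcond; apply: eq_bigr => F _; rewrite /Sk.
case: (in_forest W F) => //=; case: (#|F| == k)%N => //=.
by case: (rooted_at F i j); rewrite ?mulr1 ?mulr0.
Qed.

Lemma sigmaE k : sigma W k = \sum_(F | Sk W k F) sweight W F.
Proof. by []. Qed.

Lemma LQ k i j : ((- laplacian W) *m Qmx W k) i j =
  \sum_(F | Sk W k F) sweight W F *
     \sum_l W i l * ((rooted_at F l j)%:R - (rooted_at F i j)%:R).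
Proof.
transitivity (\sum_l W i l * (Qmx W k l j - Qmx W k i j)); last first.
  under eq_bigr do rewrite !Qentry -sumrB mulr_sumr.
  rewrite exchange_big /=; apply: eq_bigr => F _.
  rewrite mulr_sumr; apply: eq_bigr => l _.
  by rewrite -mulrBr mulrCA.
rewrite mxE (bigD1 i) //= [RHS](bigD1 i) //= !mxE eqxx hloop mul0r add0r.
under eq_bigr => l Hl do rewrite !mxE eq_sym (negbTE Hl) opprK.
under [RHS]eq_bigr => l Hl do rewrite mulrBr.
rewrite sumrB -mulr_suml mulNr addrC.
by congr (_ - _); apply: eq_bigr => l _; rewrite mxE.
Qed.

Lemma Qrec k : Qmx W k.+1 = sigma W k.+1 *: 1%:M + (- laplacian W) *m Qmx W k.
Proof.
apply/matrixP => i j.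
have -> : ((sigma W k.+1 *: 1%:M + (- laplacian W) *m Qmx W k) : 'M[R]_n) i j
   = sigma W k.+1 * (i == j)%:R + ((- laplacian W) *m Qmx W k) i j.
  by rewrite mxE [X in X + _]mxE; congr (_ * _ + _); rewrite mxE.
rewrite (LQ k i j) -(Eid hW0 k i j) Qentry sigmaE.
under [X in _ = _ + X]eq_bigr do rewrite mulrBr.
by rewrite sumrB -mulr_suml addrC subrK.
Qed.

Lemma forest0 : in_forest W set0.
Proof.
apply/forestP; split; first exact: sub0set.
  by move=> x; rewrite /outdeg (_ : [set _ | _] = set0) ?cards0 //; apply/setP => y; rewrite !inE.
move=> x; exists x; apply: sink_refl; apply/outdeg0P => y; by rewrite inE.
Qed.


Lemma Q0 : Qmx W 0 = 1%:M.
Proof.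
apply/matrixP => i j; rewrite Qentry mxE.
rewrite (big_pred1 set0); last first.
  move=> F; apply/idP/eqP => [/andP [_ /eqP H]|->].
    by apply/eqP; rewrite -cards_eq0 H.
  by apply/andP; split; [exact: forest0 | rewrite cards0].
rewrite /sweight big_set0 mul1r.
have H0 : (outdeg set0 i == 0)%N by apply/outdeg0P => y; rewrite inE.
have Hd : fdet (set0 : {set 'I_n * 'I_n}) := forest_fdet forest0.
by rewrite (rootedE _ _ forest0) (sink_iff _ Hd (sink_refl H0)) eq_sym.
Qed.

Lemma alphaE k : alpha W k = al (sigma W) k.
Proof. rewrite /alpha /al /T /term /sz /Pm. reflexivity. Qed.

End Main.

Unset Implicit Arguments.

Theorem proposition8 (R : realFieldType) (n : nat) (W : 'M[R]_n)
  (hn : (1 < n)%N)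
  (hW0 : forall i j : 'I_n, 0 <= W i j)
  (hloop : forall i : 'I_n, W i i = 0) :
  forall m : nat,
    mxpow (- laplacian W) m
    = \sum_(k < m.+1) alpha W k *: Qmx W (m - k)%N.
Proof.
elim => [|m IH].
  by rewrite /mxpow /= big_ord1 alphaE /al eqxx scale1r subn0 (Q0 W).
change (mxpow (- laplacian W) m.+1) with ((- laplacian W) *m mxpow (- laplacian W) m).
rewrite IH mulmx_sumr.
under eq_bigr => k _ do rewrite -scalemxAr.
have HQ : forall k, (- laplacian W) *m Qmx W k = Qmx W k.+1 - sigma W k.+1 *: 1%:M.
  by move=> k; rewrite (Qrec hW0 hloop k) addrC addKr.
under eq_bigr => k _ do rewrite HQ scalerBr.
rewrite sumrB [RHS]big_ord_recr /= subnn (Q0 W).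
have EA : \sum_(k < m.+1) alpha W k *: Qmx W (m - k).+1
        = \sum_(i < m.+1) alpha W i *: Qmx W (m.+1 - i)%N.
  by apply: eq_bigr => k _; rewrite subSn // -ltnS.
have EB : \sum_(k < m.+1) alpha W k *: (sigma W (m - k).+1 *: (1%:M : 'M[R]_n))
        = - (alpha W m.+1 *: 1%:M).
  under eq_bigr do rewrite scalerA.
  rewrite -scaler_suml -scaleNr; congr (_ *: _).
  rewrite alphaE al_rec opprK (reindex_inj rev_ord_inj) /=.
  apply: eq_bigr => i _; rewrite subSS subKn; last by rewrite -ltnS.
  by rewrite mulrC alphaE.
by rewrite EA EB opprK.
Qed.
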